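(* Let $r>0$ be a fixed integer. There exist a constant $c>0$ and infinitely many $n$ such that, for each such $n$, there is a hypergraph $H$ on $n$ vertices which is both $r$-cross-free and $r$-closed, and such that every sub-hypergraph $H'\subseteq H$ with $\mathrm{cl}_r(H')=H$ has at least $c\, n^r$ hyperedges (i.e. $\Omega(n^r)$ hyperedges).
   Context: Hypergraphs have vertex set $V=[n]$ and are identified with their sets of hyperedges; a sub-hypergraph is a subset of the hyperedge set; $\overline A = V\setminus A$. $\mathcal K_r(n)$ is the class of hypergraphs $\mathcal E$ on $V$ satisfying: (R0) every $X\subseteq V$ with $|X|\le r$ is in $\mathcal E$; (R1) $A\in\mathcal E\Rightarrow V\setminus A\in\mathcal E$; (R2) $A,B\in\mathcal E$ and $|A\cap B|\ge r\Rightarrow A\cup B\in\mathcal E$. $\mathcal K^0_r(n)$ is the class satisfying (R0) and (R1) only. $\mathrm{cl}_r(H)$ (resp. $\mathrm{cl}^0_r(H)$) is the intersection of all hypergraphs in $\mathcal K_r(n)$ (resp. $\mathcal K^0_r(n)$) containing $H$. $H$ is $r$-closed if $\mathrm{cl}_r(H)=H$. Sets $A,B\subseteq V$ are $r$-orthogonal if $\mathrm{cl}_r(\{A,B\})=\mathrm{cl}^0_r(\{A,B\})$. A hypergraph is $r$-cross-free if every pair of its hyperedges is $r$-orthogonal. *)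

(* Defs.v *)
From mathcomp Require Import all_boot all_order all_algebra.
Set Implicit Arguments. Unset Strict Implicit. Unset Printing Implicit Defensive.

Section Hyper.
Variable n : nat.
Notation hyp := {set {set 'I_n}}.

Definition R0 (r : nat) (E : hyp) : bool :=
  [forall X : {set 'I_n}, (#|X| <= r) ==> (X \in E)].
Definition R1 (E : hyp) : bool :=
  [forall A in E, ~: A \in E].
Definition R2 (r : nat) (E : hyp) : bool :=
  [forall A in E, forall B in E, (r <= #|A :&: B|) ==> (A :|: B \in E)].

Definition inK (r : nat) (E : hyp) : bool := [&& R0 r E, R1 E & R2 r E].
Definition inK0 (r : nat) (E : hyp) : bool := R0 r E && R1 E.

Definition cl (r : nat) (H : hyp) : hyp :=
  [set A | [forall E : hyp, (inK r E && (H \subset E)) ==> (A \in E)]].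
Definition cl0 (r : nat) (H : hyp) : hyp :=
  [set A | [forall E : hyp, (inK0 r E && (H \subset E)) ==> (A \in E)]].

Definition r_closed (r : nat) (H : hyp) : Prop := cl r H = H.

Definition r_orthogonal (r : nat) (A B : {set 'I_n}) : Prop :=
  cl r [set A; B] = cl0 r [set A; B].

Definition r_cross_free (r : nat) (H : hyp) : Prop :=
  forall A B, A \in H -> B \in H -> r_orthogonal r A B.
End Hyper.

(* Main.v *)
Require Import Defs.
From mathcomp Require Import all_boot all_order all_algebra ring.
Import Order.TTheory GRing.Theory Num.Theory.


Section Gen.
Variables (n r : nat).
Notation hyp := {set {set 'I_n}}.

Definition packing (S : hyp) :=
  (forall P, P \in S -> #|P| = r.+1) /\
  (forall P Q, P \in S -> Q \in S -> r <= #|P :&: Q| -> P = Q).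

Definition F (S : hyp) : hyp :=
  [set X : {set 'I_n} | [|| #|X| <= r, #|~:X| <= r, X \in S | ~:X \in S]].

Lemma key1 (S : hyp) (A B : {set 'I_n}) : B \in F S -> #|~:B| <= r.+1 -> A :|: B \in F S.
Proof.
move=> BF cB.
have [E|NE] := eqVneq (~:A :&: ~:B) (~:B).
  by rewrite -setCU in E; rewrite (setC_inj E).
have pr : ~:A :&: ~:B \proper ~:B by rewrite properEneq NE subsetIr.
have := proper_card pr => c.
by rewrite inE setCU; apply/or4P; apply: Or42; rewrite -ltnS (leq_trans c).
Qed.

Lemma key2 (A B : {set 'I_n}) : #|B| <= r -> r <= #|A :&: B| -> A :|: B = A.
Proof.
move=> h1 h2; apply/setUidPl; apply/setIidPr; apply/eqP.
by rewrite eqEcard subsetIr (leq_trans h1 h2).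
Qed.

Lemma F_K (S : hyp) : packing S -> inK r (F S).
Proof.
case=> hS1 hS2; apply/and3P; split.
- by apply/forallP=> X; apply/implyP=> h; rewrite inE h.
- apply/forall_inP=> A; rewrite !inE setCK.
  by case/or4P=> ->; rewrite ?orbT.
- apply/forall_inP=> A AF; apply/forall_inP=> B BF; apply/implyP=> hAB.
  move: (BF); rewrite inE; case/or4P=> hB.
  + by rewrite key2.
  + by apply: key1=> //; apply: leqW.
  + move: (AF); rewrite inE; case/or4P=> hA.
    * by rewrite setUC key2 // setIC.
    * by rewrite setUC; apply: key1=> //; apply: leqW.
    * by rewrite (hS2 _ _ hA hB hAB) setUid.
    * by rewrite setUC; apply: key1=> //; rewrite hS1.
  + by apply: key1=> //; rewrite hS1.
Qed.

Lemma sub_packing (S S' : hyp) : packing S -> S' \subset S -> packing S'.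
Proof.
case=> h1 h2 sub; split=> [P PS|P Q PS QS]; first by apply: h1; apply: (subsetP sub).
by apply: h2; apply: (subsetP sub).
Qed.

Lemma cl_min (H E : hyp) : inK r E -> H \subset E -> cl r H \subset E.
Proof.
move=> KE HE; apply/subsetP=> X; rewrite inE => /forallP /(_ E).
by rewrite KE HE => /implyP; apply.
Qed.

Lemma cl_sup (H : hyp) : H \subset cl r H.
Proof.
apply/subsetP=> X XH; rewrite inE; apply/forallP=> E; apply/implyP.
by case/andP=> _ /subsetP; apply.
Qed.

Lemma cl0_cl (H : hyp) : cl0 r H \subset cl r H.
Proof.
apply/subsetP=> X; rewrite !inE => /forallP h; apply/forallP=> E; apply/implyP.
case/andP=> /and3P [h0 h1 _] hE; move: (h E); rewrite /inK0 h0 h1 hE.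
by apply.
Qed.

Lemma K0_closedC (E : hyp) (X : {set 'I_n}) : R1 E -> ~:X \in E -> X \in E.
Proof. by move=> /forall_inP h /h; rewrite setCK. Qed.

Lemma F_closed (S : hyp) : packing S -> r_closed r (F S).
Proof.
move=> pS; apply/eqP; rewrite eqEsubset cl_sup andbT.
by apply: cl_min => //; apply: F_K.
Qed.

Lemma F_cross (S : hyp) : packing S -> r_cross_free r (F S).
Proof.
move=> pS A B AF BF; apply/eqP; rewrite eqEsubset cl0_cl andbT.
pose S' := [set P in S | [|| P == A, P == ~:A, P == B | P == ~:B]].
have pS' : packing S' by apply: sub_packing pS _; apply/subsetP=> P; rewrite inE => /andP[].
have sub : [set A; B] \subset F S'.
  apply/subsetP=> X; rewrite !inE => /orP[]/eqP->.
  - move: AF; rewrite !inE; case/or4P=> h; by rewrite ?h ?eqxx /= ?h ?orbT.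
  - move: BF; rewrite !inE; case/or4P=> h; by rewrite ?h ?eqxx /= ?h ?orbT.
have cF := cl_min _ _ (@F_K _ pS') sub; apply/subsetP=> X0 X0in; move: (subsetP cF X0 X0in); move: X0 {X0in}.
move=> X XF; rewrite inE; apply/forallP=> E; apply/implyP.
case/andP=> /andP[h0 h1] hE.
have hA : A \in E by apply: (subsetP hE); rewrite !inE eqxx.
have hB : B \in E by apply: (subsetP hE); rewrite !inE eqxx orbT.
have hCA : ~:A \in E by move: h1 => /forall_inP; apply.
have hCB : ~:B \in E by move: h1 => /forall_inP; apply.
have g : forall Y, Y \in S' -> Y \in E.
  by move=> Y; rewrite inE => /andP[_] /or4P[]/eqP->.
move: XF; rewrite inE; case/or4P=> h.
- by move: h0 => /forallP /(_ X); rewrite h.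
- by apply: (K0_closedC _ _ h1); move: h0 => /forallP /(_ (~:X)); rewrite h.
- exact: g.
- by apply: (K0_closedC _ _ h1); apply: g.
Qed.

Lemma F_lower (S H' : hyp) : packing S -> 2 * r.+1 <= n ->
  H' \subset F S -> cl r H' = F S -> #|S| <= 2 * #|H'|.
Proof.
move=> pS hn sub clH.
pose S' := [set P in S | (P \in H') || (~:P \in H')].
have pS' : packing S' by apply: sub_packing pS _; apply/subsetP=> P; rewrite inE => /andP[].
have sub' : H' \subset F S'.
  apply/subsetP=> X XH; move: (subsetP sub X XH); rewrite !inE.
  by case/or4P=> ->; rewrite ?orbT //= XH ?setCK ?XH ?orbT.
have := cl_min _ _ (@F_K _ pS') sub'; rewrite clH => FF.
have SH : S \subset H' :|: [set ~:X | X in H'].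
  apply/subsetP=> P PS.
  have cP : #|P| = r.+1 := pS.1 P PS.
  have : P \in F S by rewrite inE PS /= !orbT.
  move/(subsetP FF); rewrite inE; case/or4P.
  - by rewrite cP ltnn.
  - move=> h; exfalso; have := cardsC P; rewrite cP card_ord => e.
    by move: hn; rewrite -e mul2n -addnn leq_add2l leqNgt ltnS h.
  - rewrite inE => /andP[_] /orP[h|h]; rewrite inE ?h //; apply/orP; right.
    by apply/imsetP; exists (~:P); rewrite ?setCK.
  - rewrite inE setCK => /andP[_] /orP[h|h]; rewrite inE ?h //; apply/orP; right.
    by apply/imsetP; exists (~:P); rewrite ?setCK.
apply: leq_trans (subset_leq_card SH) _.
by rewrite (leq_trans (leq_card_setU _ _)) // mul2n -addnn leq_add2l leq_imset_card.
Qed.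
End Gen.


Section Constr.
Variables r M : nat.
Definition Tv := ('I_r.+1 * 'I_M.+1)%type.
Notation nn := #|{: Tv}|.

Definition sumord (x : {ffun 'I_r -> 'I_M.+1}) : 'I_M.+1 :=
  Ordinal (ltn_pmod (\sum_j val (x j)) (ltn0Sn M)).

Definition ext (x : {ffun 'I_r -> 'I_M.+1}) (i : 'I_r.+1) : 'I_M.+1 :=
  match unlift ord_max i with Some j => x j | None => sumord x end.

Lemma ext_lift x j : ext x (lift ord_max j) = x j.
Proof. by rewrite /ext liftK. Qed.

Lemma ext_max x : ext x ord_max = sumord x.
Proof. by rewrite /ext unlift_none. Qed.

Definition Pset (x : {ffun 'I_r -> 'I_M.+1}) : {set 'I_nn} :=
  [set enum_rank ((i, ext x i) : Tv) | i : 'I_r.+1].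

Lemma Pset_card x : #|Pset x| = r.+1.
Proof.
rewrite card_imset ?card_ord // => i j /enum_rank_inj [] //.
Qed.

Lemma Pset_mem x i : enum_rank ((i, ext x i) : Tv) \in Pset x.
Proof. by apply/imsetP; exists i. Qed.

Lemma Pset_inj : injective Pset.
Proof.
move=> x y e; apply/ffunP=> j.
have := Pset_mem x (lift ord_max j); rewrite e => /imsetP [i _] /enum_rank_inj [<-].
by rewrite !ext_lift.
Qed.

Lemma Pset_inter x y : r <= #|Pset x :&: Pset y| -> x = y.
Proof.
move=> h.
pose D := [set i | ext x i != ext y i].
have sub : Pset x :&: Pset y \subset
   [set enum_rank ((i, ext x i) : Tv) | i in ~: D].
  apply/subsetP=> z; rewrite inE => /andP[/imsetP[i _ ->] /imsetP[i' _]].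
  move/enum_rank_inj=> [ei ee]; subst i'.
  by apply/imsetP; exists i => //; rewrite !inE negbK ee.
have cD : #|D| <= 1.
  have := leq_trans h (leq_trans (subset_leq_card sub) (leq_imset_card _ _)).
  have := cardsC D; rewrite card_ord => e.
  move=> hr; rewrite -(leq_add2r #|~: D|) e add1n ltnS //.
apply/eqP; apply/negPn/negP=> /eqP ne.
have [j hj] : exists j, x j != y j.
  case: (pickP (fun j => x j != y j)) => [j hj|hn]; first by exists j.
  by exfalso; apply: ne; apply/ffunP=> j; apply/eqP; move: (hn j) => /negbFE.
have jD : lift ord_max j \in D by rewrite inE !ext_lift.
have onlyj : forall i, i \in D -> i = lift ord_max j.
  move=> i iD; apply/eqP; apply/negPn/negP=> nij.
  have : #|[set i; lift ord_max j]| <= #|D|.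
    by apply: subset_leq_card; apply/subsetP=> z; rewrite in_set2 => /orP[]/eqP->.
  by rewrite cards2 nij => /leq_trans /(_ cD).
have agree : forall k, k != j -> x k = y k.
  move=> k nk; apply/eqP; apply/negPn/negP=> nxy.
  have : lift ord_max k \in D by rewrite inE !ext_lift.
  by move/onlyj/lift_inj/eqP; rewrite (negbTE nk).
have smax : sumord x = sumord y.
  apply/eqP; apply/negPn/negP=> ns.
  have : ord_max \in D by rewrite inE !ext_max.
  by move/onlyj/eqP; rewrite (negbTE (neq_lift _ _)).
move: smax => /(congr1 val) /=.
rewrite (bigD1 j) //= [in RHS](bigD1 j) //=.
rewrite (eq_bigr (fun k => val (y k))); last by move=> k /agree ->.
move/eqP; rewrite eqn_modDr !modn_small // => /eqP e.
by move: hj; rewrite (val_inj e) eqxx.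
Qed.

Definition Sfam : {set {set 'I_nn}} := [set Pset x | x : {ffun 'I_r -> 'I_M.+1}].

Lemma Sfam_packing : @packing _ r Sfam.
Proof.
split.
- by move=> P /imsetP[x _ ->]; apply: Pset_card.
- move=> P Q /imsetP[x _ ->] /imsetP[y _ ->] h.
  by rewrite (Pset_inter _ _ h).
Qed.

Lemma Sfam_card : #|Sfam| = M.+1 ^ r.
Proof. by rewrite card_imset; [rewrite card_ffun !card_ord | apply: Pset_inj]. Qed.

Lemma nn_val : nn = r.+1 * M.+1.
Proof. by rewrite card_prod !card_ord. Qed.
End Constr.

Local Open Scope ring_scope.


Theorem theorem3 (r : nat) (hr : (0 < r)%N) :
  exists c : rat, 0 < c /\
    forall N : nat, exists n : nat, (N <= n)%N /\
      exists H : {set {set 'I_n}},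
        r_cross_free r H /\ r_closed r H /\
        forall H' : {set {set 'I_n}}, H' \subset H -> cl r H' = H ->
          c * (n%:R ^+ r) <= (#|H'|)%:R.
Proof.
exists (1 / (2 * r.+1 ^ r)%N%:R); split.
  by rewrite divr_gt0 // ltr0n muln_gt0 expn_gt0.
move=> N; exists #|{: Tv r N.+1}|; split.
  by rewrite nn_val (leq_trans (leqnSn N)) // (leq_trans (leqnSn _)) // leq_pmull.
exists (@F _ r (Sfam r N.+1)).
have pS := Sfam_packing r N.+1.
split; first exact: F_cross.
split; first exact: F_closed.
move=> H' sub clH.
have hn : (2 * r.+1 <= #|{: Tv r N.+1}|)%N.
  by rewrite nn_val mulnC leq_mul2l /=.
have := @F_lower _ _ _ _ pS hn sub clH; rewrite Sfam_card => hc.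
have -> : (#|{: Tv r N.+1}|%:R : rat) = (r.+1 * N.+2)%N%:R by rewrite nn_val.
rewrite !natrM !natrX exprMn mulrA.
have -> : 1 / (2%:R * r.+1%:R ^+ r) * r.+1%:R ^+ r = (1 / 2 : rat).
  field.
  by rewrite expf_neq0 // pnatr_eq0.
rewrite mul1r ler_pdivrMl // -natrX -natrM ler_nat.
exact: hc.
Qed.
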